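(* Let $\ell>0$, let $F$ be a smooth closed front wheel trajectory of length $T$ parametrized by arc length, and suppose there is a closed rear wheel trajectory $R(t)$, $t\in[0,T]$, of the bicycle of length $\ell$ (so the bicycle monodromy $M_F$ has a fixed point, and $M_F$ is hyperbolic or parabolic). Let $L=\int_0^T\cos\alpha(t)\,dt$ be the signed length of $R$, where $\alpha(t)=\arg F'(t)-\arg\overrightarrow{R(t)F(t)}$ is the steering angle. Then the derivatives of $M_F$ at its two fixed points are $e^{L/\ell}$ and $e^{-L/\ell}$.
   Context: Bicycle model: a segment $RF$ of fixed length $\ell$ moves in the plane ($F$ = front wheel, $R$ = rear wheel) subject to the constraint that the velocity of $R$ is always parallel to $RF$. Given the front path and an initial position of $R$ on the circle of radius $\ell$ about the initial front point, the rear path is determined. For a closed front path, the bicycle monodromy $M_F$ is the self-map of the circle of radius $\ell$ (parametrized by angle) sending the initial position of $R$ relative to $F$ to its terminal position; it is a Möbius transformation, called hyperbolic if it has two fixed points, parabolic if it has exactly one (a double fixed point), elliptic if none. The signed length of the rear track is its net roll: the alternating sum of lengths of its smooth pieces, with sign changing at each cusp; equivalently $\int_0^T\cos\alpha\,dt$, since $R'=\cos\alpha\,\overrightarrow{RF}/\ell$. *)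

(* Defs.v *)
From Stdlib Require Import Reals.
From Coquelicot Require Import Coquelicot.
Open Scope R_scope.

Definition smooth (f : R -> R) : Prop := forall (n : nat) (x : R), ex_derive_n f n x.

Definition closed_arclength_front (Fx Fy : R -> R) (T : R) : Prop :=
  0 < T /\ smooth Fx /\ smooth Fy /\
  (forall t, Fx (t + T) = Fx t /\ Fy (t + T) = Fy t) /\
  (forall t, (Derive Fx t) ^ 2 + (Derive Fy t) ^ 2 = 1).

Definition rear_track (l : R) (Fx Fy Rx Ry : R -> R) (T : R) : Prop :=
  forall t, 0 <= t <= T ->
    ex_derive Rx t /\ ex_derive Ry t /\
    (Fx t - Rx t) ^ 2 + (Fy t - Ry t) ^ 2 = l ^ 2 /\
    Derive Rx t * (Fy t - Ry t) - Derive Ry t * (Fx t - Rx t) = 0.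

Definition rel_angle (l : R) (Fx Fy Rx Ry : R -> R) (t a : R) : Prop :=
  Fx t - Rx t = l * cos a /\ Fy t - Ry t = l * sin a.

(* M : R -> R is (a continuous lift to angles of) the bicycle monodromy M_F:
   every rear track starting at relative angle a ends at relative angle M a. *)
Definition is_monodromy (l : R) (Fx Fy : R -> R) (T : R) (M : R -> R) : Prop :=
  (forall a, continuous M a) /\
  forall (Rx Ry : R -> R) (a : R),
    rear_track l Fx Fy Rx Ry T -> rel_angle l Fx Fy Rx Ry 0 a ->
    rel_angle l Fx Fy Rx Ry T (M a).

Definition circle_fixed (M : R -> R) (a : R) : Prop :=
  exists k : Z, M a = a + 2 * IZR k * PI.

(* cos of the steering angle alpha = arg F' - arg RF; since |F'| = 1 and
   |RF| = l this is the normalized dot product F'.(F - R) / l. *)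
Definition cos_steer (l : R) (Fx Fy Rx Ry : R -> R) (t : R) : R :=
  (Derive Fx t * (Fx t - Rx t) + Derive Fy t * (Fy t - Ry t)) / l.

Definition signed_length (l : R) (Fx Fy Rx Ry : R -> R) (T : R) : R :=
  RInt (cos_steer l Fx Fy Rx Ry) 0 T.

(* Main.v *)
Require Import Defs.
From Stdlib Require Import Reals.
From Coquelicot Require Import Coquelicot.
From Stdlib Require Import Lra.
Open Scope R_scope.

Lemma sin_cos_2kPI (k : Z) : sin (2 * IZR k * PI) = 0 /\ cos (2 * IZR k * PI) = 1.
Proof.
  assert (h : sin (IZR k * PI) = 0) by (apply sin_eq_0_1; eauto).
  replace (2 * IZR k * PI) with (2 * (IZR k * PI)) by ring.
  rewrite sin_2a, cos_2a_sin, h. split; ring.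
Qed.

Lemma cos_sin_shift (y : R) (k : Z) :
  cos (y + 2 * IZR k * PI) = cos y /\ sin (y + 2 * IZR k * PI) = sin y.
Proof.
  destruct (sin_cos_2kPI k) as [h1 h2].
  rewrite cos_plus, sin_plus, h1, h2. split; ring.
Qed.

Lemma angle_eq (x y : R) : cos x = cos y -> sin x = sin y ->
  exists k : Z, x = y + 2 * IZR k * PI.
Proof.
  intros hc hs.
  assert (hd : cos (x - y) = 1) by (rewrite cos_minus, hc, hs;
    pose proof (sin2_cos2 y) as H; unfold Rsqr in H; lra).
  assert (h2 : sin ((x - y)/2) = 0).
  { replace (x - y) with (2 * ((x-y)/2)) in hd by field.
    rewrite cos_2a_sin in hd. 
    assert (sin ((x-y)/2) * sin ((x-y)/2) = 0) by lra.
    destruct (Rmult_integral _ _ H); auto. }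
  destruct (sin_eq_0_0 _ h2) as [k hk]. exists k. lra.
Qed.

Lemma circle_fixed_iff (M : R -> R) (b : R) :
  cos (M b) = cos b -> sin (M b) = sin b -> circle_fixed M b.
Proof. intros. unfold circle_fixed. apply angle_eq; auto. Qed.

Lemma circle_fixed_cs (M : R -> R) (b : R) :
  circle_fixed M b -> cos (M b) = cos b /\ sin (M b) = sin b.
Proof. intros [k hk]. rewrite hk. apply cos_sin_shift. Qed.

Lemma is_derive_asin0 : is_derive asin 0 1.
Proof.
  apply is_derive_Reals.
  assert (H : -1 < 0 < 1) by lra.
  apply (derive_pt_eq_1 _ _ _ (derivable_pt_asin 0 H)).
  rewrite derive_pt_asin. replace (1 - 0²) with 1 by (unfold Rsqr; ring).
  rewrite sqrt_1. field.
Qed.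

Ltac derh := repeat split; try (eexists; eassumption); try exact I.
Ltac subst_der := repeat match goal with
 | h : is_derive ?f ?x ?d |- context [Derive ?g ?x] => replace (Derive g x) with d by (symmetry; apply is_derive_unique; exact h)
 end.

Lemma lift_deriv (M Gc Gs : R -> R) (a dc ds : R) :
  continuous M a ->
  (forall x, cos (M x) = Gc x) -> (forall x, sin (M x) = Gs x) ->
  is_derive Gc a dc -> is_derive Gs a ds ->
  is_derive M a (Gc a * ds - Gs a * dc).
Proof.
  intros hM hc hs hdc hds.
  set (g := fun x => Gs x * Gc a - Gc x * Gs a).
  assert (hg : is_derive g a (ds * Gc a - dc * Gs a)).
  { unfold g. auto_derive. derh. subst_der. ring. }
  assert (hga : g a = 0) by (unfold g; ring).
  assert (hgs : forall x, g x = sin (M x - M a)).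
  { intro x. unfold g. rewrite sin_minus, <- hc, <- hs, <- hc, <- hs. ring. }
  assert (hloc : locally a (fun x => Rabs (M x - M a) < 1)).
  { apply filterlim_locally with (eps := mkposreal 1 Rlt_0_1) in hM.
    eapply filter_imp; [|exact hM]. intros x hx. exact hx. }
  assert (hA : is_derive asin (g a) 1) by (rewrite hga; apply is_derive_asin0).
  pose proof (is_derive_comp asin g a 1 _ hA hg) as hcomp.
  pose proof (is_derive_plus (fun _ => M a) (fun x => asin (g x)) a 0 _ (is_derive_const (M a) a) hcomp) as hp.
  apply (is_derive_ext_loc (fun x => plus (M a) (asin (g x)))).
  - eapply filter_imp; [|exact hloc]. intros x hx. simpl.
    rewrite hgs, asin_sin. unfold plus; simpl. ring.
    pose proof PI2_1. apply Rabs_def2 in hx. lra.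
  - replace (Gc a * ds - Gs a * dc) with (plus 0 (scal (ds * Gc a - dc * Gs a) 1)).
    exact hp. unfold plus, scal; simpl. unfold mult; simpl. ring.
Qed.

Lemma deriv_zero_on (f : R -> R) (t d T : R) : 0 < T -> 0 <= t <= T ->
  is_derive f t d -> (forall s, 0 <= s <= T -> f s = 0) -> d = 0.
Proof.
  intros hT ht hd hf. apply is_derive_Reals in hd.
  destruct (Req_dec d 0) as [|hne]; auto. exfalso.
  assert (he : 0 < Rabs d / 2) by (pose proof (Rabs_pos_lt d hne); lra).
  destruct (hd _ he) as [del hdel].
  pose proof (cond_pos del) as hdp.
  assert (hex : exists h, h <> 0 /\ Rabs h < del /\ 0 <= t + h <= T).
  { destruct (Rlt_or_le t T) as [hlt|hge].
    - exists (Rmin (del/2) ((T-t)/2)).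
      pose proof (Rmin_l (del/2) ((T-t)/2)). pose proof (Rmin_r (del/2) ((T-t)/2)).
      assert (0 < Rmin (del/2) ((T-t)/2)) by (apply Rmin_glb_lt; lra).
      rewrite Rabs_pos_eq by lra. repeat split; lra.
    - exists (- Rmin (del/2) (T/2)).
      pose proof (Rmin_l (del/2) (T/2)). pose proof (Rmin_r (del/2) (T/2)).
      assert (0 < Rmin (del/2) (T/2)) by (apply Rmin_glb_lt; lra).
      rewrite Rabs_Ropp, Rabs_pos_eq by lra. repeat split; lra. }
  destruct hex as [h [h0 [h1 h2]]].
  specialize (hdel h h0 h1).
  rewrite (hf (t+h) h2), (hf t ht) in hdel.
  replace ((0 - 0)/h - d) with (-d) in hdel by (field; auto).
  rewrite Rabs_Ropp in hdel. lra.
Qed.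


Definition clampT (T t : R) := Rmax 0 (Rmin T t).

Lemma clamp_in T t : 0 < T -> 0 <= clampT T t <= T.
Proof. intro. unfold clampT, Rmax, Rmin. repeat destruct Rle_dec; lra. Qed.

Lemma clamp_id T t : 0 <= t <= T -> clampT T t = t.
Proof. intro. unfold clampT, Rmax, Rmin. repeat destruct Rle_dec; lra. Qed.

Lemma clamp_cont T t : 0 < T -> continuous (clampT T) t.
Proof.
  intro hT. apply continuity_pt_filterlim.
  intros eps heps. exists eps. split; auto. intros x [_ hx]. simpl in *. unfold R_dist in *.
  revert hx. unfold clampT, Rmax, Rmin. repeat destruct Rle_dec; unfold Rabs; repeat destruct Rcase_abs; lra.
Qed.

Lemma smooth_ex_derive f x : smooth f -> ex_derive f x.
Proof. intro h. exact (h 1%nat x). Qed.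

Lemma smooth_ex_derive2 f x : smooth f -> ex_derive (Derive f) x.
Proof. intro h. exact (h 2%nat x). Qed.

Ltac eta_der := repeat match goal with |- context [Derive (fun x => ?f x) ?t] =>
  change (Derive (fun x => f x) t) with (Derive f t) end.

Definition sin_steer (l : R) (Fx Fy Rx Ry : R -> R) (t : R) : R :=
  (- Derive Fx t * (Fy t - Ry t) + Derive Fy t * (Fx t - Rx t)) / l.

Lemma steer_ex_derive l T Fx Fy Rx Ry s : closed_arclength_front Fx Fy T ->
  rear_track l Fx Fy Rx Ry T -> 0 <= s <= T ->
  ex_derive (cos_steer l Fx Fy Rx Ry) s /\ ex_derive (sin_steer l Fx Fy Rx Ry) s.
Proof.
  intros [hT [hx [hy _]]] hR hs. destruct (hR s hs) as [h1 [h2 _]].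
  pose proof (smooth_ex_derive Fx s hx). pose proof (smooth_ex_derive Fy s hy).
  pose proof (smooth_ex_derive2 Fx s hx). pose proof (smooth_ex_derive2 Fy s hy).
  unfold cos_steer, sin_steer. split; auto_derive; repeat split; auto.
Qed.

Definition hh l T Fx Fy Rx Ry t := cos_steer l Fx Fy Rx Ry (clampT T t) / l.
Definition gg l T Fx Fy Rx Ry t := sin_steer l Fx Fy Rx Ry (clampT T t) / l.
Definition EE l T Fx Fy Rx Ry t := exp (RInt (hh l T Fx Fy Rx Ry) 0 t).
Definition II l T Fx Fy Rx Ry t :=
  RInt (fun s => gg l T Fx Fy Rx Ry s / EE l T Fx Fy Rx Ry s) 0 t.

Lemma cont_comp_clamp (f : R -> R) T l t : 0 < T ->
  (forall s, 0 <= s <= T -> ex_derive f s) ->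
  continuous (fun t => f (clampT T t) / l) t.
Proof.
  intros hT hf.
  apply (continuous_comp (clampT T) (fun u => f u / l)).
  - apply clamp_cont; auto.
  - apply (@ex_derive_continuous R_AbsRing R_NormedModule). pose proof (hf _ (clamp_in T t hT)).
    auto_derive. auto.
Qed.

Lemma hh_cont l T Fx Fy Rx Ry t : closed_arclength_front Fx Fy T ->
  rear_track l Fx Fy Rx Ry T -> continuous (hh l T Fx Fy Rx Ry) t.
Proof.
  intros hF hR. pose proof hF as [hT _]. unfold hh.
  apply cont_comp_clamp; auto. intros s hs. apply (steer_ex_derive l T Fx Fy Rx Ry s hF hR hs).
Qed.

Lemma gg_cont l T Fx Fy Rx Ry t : closed_arclength_front Fx Fy T ->
  rear_track l Fx Fy Rx Ry T -> continuous (gg l T Fx Fy Rx Ry) t.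
Proof.
  intros hF hR. pose proof hF as [hT _]. unfold gg.
  apply cont_comp_clamp; auto. intros s hs. apply (steer_ex_derive l T Fx Fy Rx Ry s hF hR hs).
Qed.

Lemma RInt_deriv (f : R -> R) t : (forall x, continuous f x) ->
  is_derive (fun u => RInt f 0 u) t (f t).
Proof.
  intro hc. apply is_derive_RInt with (a := 0).
  - exists (mkposreal 1 Rlt_0_1). intros y _. apply RInt_correct.
    apply ex_RInt_continuous. intros; apply hc.
  - apply hc.
Qed.

Lemma EE_deriv l T Fx Fy Rx Ry t : closed_arclength_front Fx Fy T ->
  rear_track l Fx Fy Rx Ry T ->
  is_derive (EE l T Fx Fy Rx Ry) t (hh l T Fx Fy Rx Ry t * EE l T Fx Fy Rx Ry t).
Proof.
  intros hF hR.
  pose proof (RInt_deriv (hh l T Fx Fy Rx Ry) t (fun x => hh_cont l T Fx Fy Rx Ry x hF hR)) as hd.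
  assert (hc : forall x, continuous (hh l T Fx Fy Rx Ry) x) by (intro; apply hh_cont; auto).
  unfold EE. auto_derive.
  - split. apply (@ex_RInt_continuous R_CompleteNormedModule). intros; apply hc.
    split; [|exact I]. exists (mkposreal 1 Rlt_0_1). intros y _. apply continuity_pt_filterlim, hc.
  - rewrite Rmult_1_l. reflexivity.
Qed.

Lemma EE_pos l T Fx Fy Rx Ry t : 0 < EE l T Fx Fy Rx Ry t.
Proof. apply exp_pos. Qed.

Lemma EE_0 l T Fx Fy Rx Ry : EE l T Fx Fy Rx Ry 0 = 1.
Proof. unfold EE. rewrite RInt_point. apply exp_0. Qed.

Lemma II_0 l T Fx Fy Rx Ry : II l T Fx Fy Rx Ry 0 = 0.
Proof. unfold II. rewrite RInt_point. reflexivity. Qed.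

Lemma II_deriv l T Fx Fy Rx Ry t : closed_arclength_front Fx Fy T ->
  rear_track l Fx Fy Rx Ry T ->
  is_derive (II l T Fx Fy Rx Ry) t (gg l T Fx Fy Rx Ry t / EE l T Fx Fy Rx Ry t).
Proof.
  intros hF hR. unfold II. apply (RInt_deriv (fun s => gg l T Fx Fy Rx Ry s / EE l T Fx Fy Rx Ry s)).
  intro x. apply (continuous_ext (fun y => mult (gg l T Fx Fy Rx Ry y) (/ EE l T Fx Fy Rx Ry y))).
  { intros; reflexivity. }
  apply (@continuous_mult R_UniformSpace R_AbsRing). apply gg_cont; auto.
  apply (@ex_derive_continuous R_AbsRing R_NormedModule). pose proof (EE_deriv l T Fx Fy Rx Ry x hF hR).
  pose proof (EE_pos l T Fx Fy Rx Ry x).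
  auto_derive. split; [eexists; eauto| split; [lra|exact I]].
Qed.

Definition XX l T Fx Fy Rx Ry ps t :=
  EE l T Fx Fy Rx Ry t * (cos (ps/2) + sin (ps/2) * II l T Fx Fy Rx Ry t).

Definition UX l T Fx Fy Rx Ry ps t :=
  let X := XX l T Fx Fy Rx Ry ps t in let Y := sin (ps/2) in
  ((X^2-Y^2)*((Fx t - Rx t)/l) - 2*X*Y*((Fy t - Ry t)/l))/(X^2+Y^2).
Definition UY l T Fx Fy Rx Ry ps t :=
  let X := XX l T Fx Fy Rx Ry ps t in let Y := sin (ps/2) in
  ((X^2-Y^2)*((Fy t - Ry t)/l) + 2*X*Y*((Fx t - Rx t)/l))/(X^2+Y^2).
Definition RXt l T Fx Fy Rx Ry ps t := Fx t - l * UX l T Fx Fy Rx Ry ps t.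
Definition RYt l T Fx Fy Rx Ry ps t := Fy t - l * UY l T Fx Fy Rx Ry ps t.

Lemma Npos_lem (E c s I : R) : 0 < E -> c^2 + s^2 = 1 -> 0 < (E*(c+s*I))^2 + s^2.
Proof.
  intros hE h. destruct (Req_dec s 0) as [hs|hs].
  - subst. assert (c <> 0) by (intro; subst; lra).
    assert (E * (c + 0*I) <> 0) by (replace (E*(c+0*I)) with (E*c) by ring; apply Rmult_integral_contrapositive; split; lra).
    pose proof (pow2_gt_0 _ H0). lra.
  - pose proof (pow2_gt_0 _ hs). pose proof (pow2_ge_0 (E*(c+s*I))). lra.
Qed.

Lemma XX_N l T Fx Fy Rx Ry ps t :
  0 < (XX l T Fx Fy Rx Ry ps t)^2 + (sin (ps/2))^2.
Proof.
  unfold XX. apply Npos_lem. apply EE_pos.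
  pose proof (sin2_cos2 (ps/2)). unfold Rsqr in H. lra.
Qed.

Lemma XX_deriv l T Fx Fy Rx Ry ps t : closed_arclength_front Fx Fy T ->
  rear_track l Fx Fy Rx Ry T ->
  is_derive (XX l T Fx Fy Rx Ry ps) t
    (hh l T Fx Fy Rx Ry t * XX l T Fx Fy Rx Ry ps t + gg l T Fx Fy Rx Ry t * sin (ps/2)).
Proof.
  intros hF hR. pose proof (EE_deriv l T Fx Fy Rx Ry t hF hR).
  pose proof (II_deriv l T Fx Fy Rx Ry t hF hR). pose proof (EE_pos l T Fx Fy Rx Ry t).
  unfold XX. auto_derive. derh. subst_der. field. lra.
Qed.

Lemma rear_deriv l T Fx Fy Rx Ry t : 0 < l -> closed_arclength_front Fx Fy T ->
  rear_track l Fx Fy Rx Ry T -> 0 <= t <= T ->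
  Derive Rx t = Derive Fx t + ((Fy t - Ry t)/l) * sin_steer l Fx Fy Rx Ry t /\
  Derive Ry t = Derive Fy t - ((Fx t - Rx t)/l) * sin_steer l Fx Fy Rx Ry t.
Proof.
  intros hl hF hR ht. pose proof hF as [hT [hx [hy _]]].
  destruct (hR t ht) as [h1 [h2 [h3 h4]]].
  pose proof (smooth_ex_derive Fx t hx). pose proof (smooth_ex_derive Fy t hy).
  assert (hd : is_derive (fun u => (Fx u - Rx u)^2 + (Fy u - Ry u)^2 - l^2) t
     (2*(Fx t - Rx t)*(Derive Fx t - Derive Rx t) + 2*(Fy t - Ry t)*(Derive Fy t - Derive Ry t))).
  { auto_derive. repeat split; auto. eta_der. ring. }
  apply deriv_zero_on with (T := T) in hd; auto.
  2:{ intros s hs. destruct (hR s hs) as [_ [_ [h _]]]. rewrite h. ring. }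
  unfold sin_steer. 
  set (Dx := Fx t - Rx t) in *. set (Dy := Fy t - Ry t) in *.
  set (a := Derive Fx t) in *. set (b := Derive Fy t) in *.
  set (c := Derive Rx t) in *. set (d := Derive Ry t) in *.
  assert (hl2 : l^2 <> 0) by (apply pow_nonzero; lra).
  split.
  - apply Rmult_eq_reg_r with (l^2); auto.
    replace ((a + Dy / l * ((- a * Dy + b * Dx) / l)) * l ^ 2) with (a*l^2 + Dy*(-a*Dy+b*Dx)) by (field; lra).
    rewrite <- h3. 
    replace (c * (Dx^2+Dy^2)) with (Dx*(Dx*c + Dy*d) + Dy*(c*Dy - d*Dx)) by ring.
    rewrite h4. replace (Dx*c + Dy*d) with (Dx*a + Dy*b) by lra. ring.
  - apply Rmult_eq_reg_r with (l^2); auto.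
    replace ((b - Dx / l * ((- a * Dy + b * Dx) / l)) * l ^ 2) with (b*l^2 - Dx*(-a*Dy+b*Dx)) by (field; lra).
    rewrite <- h3. 
    replace (d * (Dx^2+Dy^2)) with (Dy*(Dx*c + Dy*d) - Dx*(c*Dy - d*Dx)) by ring.
    rewrite h4. replace (Dx*c + Dy*d) with (Dx*a + Dy*b) by lra. ring.
Qed.

Lemma algW (p q dFx dFy X Y l : R) :
  l <> 0 -> X^2+Y^2 <> 0 ->
  let s := -dFx*q + dFy*p in let c := dFx*p+dFy*q in
  let N := X^2+Y^2 in let A := X^2-Y^2 in let B := 2*X*Y in
  let Ux := (A*p - B*q)/N in let Uy := (A*q+B*p)/N in
  s/l - 2*Y*((c*X+s*Y)/l)/N = (dFy*Ux - dFx*Uy)/l.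
Proof. intros. unfold Ux, Uy, A, B, N, s, c in *. field; auto. Qed.
Lemma algN (p q X Y : R) : X^2+Y^2 <> 0 -> p^2+q^2 = 1 ->
  let N := X^2+Y^2 in let A := X^2-Y^2 in let B := 2*X*Y in
  ((A*p - B*q)/N)^2 + ((A*q+B*p)/N)^2 = 1.
Proof. intros hN h N A B. transitivity (p^2+q^2); [|exact h]. unfold A,B,N in *. field. auto. Qed.

Lemma new_track l T Fx Fy Rx Ry ps : 0 < l -> closed_arclength_front Fx Fy T ->
  rear_track l Fx Fy Rx Ry T ->
  rear_track l Fx Fy (RXt l T Fx Fy Rx Ry ps) (RYt l T Fx Fy Rx Ry ps) T.
Proof.
  intros hl hF hR t ht. pose proof hF as [hT [hx [hy _]]].
  destruct (hR t ht) as [h1 [h2 [h3 h4]]].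
  pose proof (smooth_ex_derive Fx t hx). pose proof (smooth_ex_derive Fy t hy).
  destruct (rear_deriv l T Fx Fy Rx Ry t hl hF hR ht) as [dRx dRy].
  pose proof (XX_deriv l T Fx Fy Rx Ry ps t hF hR) as hX.
  unfold hh, gg in hX. rewrite clamp_id in hX by auto.
  pose proof (XX_N l T Fx Fy Rx Ry ps t) as hN.
  set (X := XX l T Fx Fy Rx Ry ps t) in *.
  set (Y := sin (ps/2)) in *.
  set (c := cos_steer l Fx Fy Rx Ry t) in *.
  set (s := sin_steer l Fx Fy Rx Ry t) in *.
  set (w := s/l - 2*Y*((c*X+s*Y)/l)/(X^2+Y^2)).
  assert (hXd : ex_derive (XX l T Fx Fy Rx Ry ps) t) by (eexists; exact hX).
  assert (D1 : is_derive (RXt l T Fx Fy Rx Ry ps) t (Derive Fx t + l * UY l T Fx Fy Rx Ry ps t * w)).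
  { unfold RXt, UX. auto_derive.
    - repeat split; auto. fold X Y. lra.
    - eta_der. rewrite dRx, dRy. subst_der. fold X Y. unfold UY. fold X Y. unfold w. field. split; [lra|]. intro hc; apply (Rlt_irrefl 0); rewrite <- hc at 2; lra. }
  assert (D2 : is_derive (RYt l T Fx Fy Rx Ry ps) t (Derive Fy t - l * UX l T Fx Fy Rx Ry ps t * w)).
  { unfold RYt, UY. auto_derive.
    - repeat split; auto. fold X Y. lra.
    - eta_der. rewrite dRx, dRy. subst_der. fold X Y. unfold UX. fold X Y. unfold w. field. split; [lra|]. intro hc; apply (Rlt_irrefl 0); rewrite <- hc at 2; lra. }
  assert (hpq : ((Fx t - Rx t)/l)^2 + ((Fy t - Ry t)/l)^2 = 1).
  { replace (((Fx t - Rx t)/l)^2 + ((Fy t - Ry t)/l)^2) with (((Fx t - Rx t)^2 + (Fy t - Ry t)^2)/l^2) by (field; lra).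
    rewrite h3. field. lra. }
  assert (hU : (UX l T Fx Fy Rx Ry ps t)^2 + (UY l T Fx Fy Rx Ry ps t)^2 = 1).
  { unfold UX, UY. fold X Y. apply algN; auto. lra. }
  assert (hw : w = (Derive Fy t * UX l T Fx Fy Rx Ry ps t - Derive Fx t * UY l T Fx Fy Rx Ry ps t)/l).
  { unfold w, UX, UY, s, c, sin_steer, cos_steer. fold X Y. field. split; [lra|]. intro hc; apply (Rlt_irrefl 0); rewrite <- hc at 2; lra. }
  split; [eexists; exact D1|]. split; [eexists; exact D2|].
  rewrite (is_derive_unique _ _ _ D1), (is_derive_unique _ _ _ D2).
  unfold RXt, RYt.
  set (ux := UX l T Fx Fy Rx Ry ps t) in *. set (uy := UY l T Fx Fy Rx Ry ps t) in *.
  split.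
  - replace ((Fx t - (Fx t - l * ux)) ^ 2 + (Fy t - (Fy t - l * uy)) ^ 2) with (l^2 * (ux^2+uy^2)) by ring.
    rewrite hU. ring.
  - replace ((Derive Fx t + l * uy * w) * (Fy t - (Fy t - l * uy)) - (Derive Fy t - l * ux * w) * (Fx t - (Fx t - l * ux)))
      with (l * (Derive Fx t * uy - Derive Fy t * ux) + l * (l * w) * (ux^2+uy^2)) by ring.
    rewrite hU, hw. field. lra.
Qed.


Definition XF e K a0 x := e * (cos ((x-a0)/2) + sin ((x-a0)/2) * K).
Definition NF e K a0 x := (XF e K a0 x)^2 + (sin ((x-a0)/2))^2.
Definition GcF e K a0 x :=
  (((XF e K a0 x)^2 - (sin ((x-a0)/2))^2) * cos a0 - 2 * XF e K a0 x * sin ((x-a0)/2) * sin a0) / NF e K a0 x.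
Definition GsF e K a0 x :=
  (((XF e K a0 x)^2 - (sin ((x-a0)/2))^2) * sin a0 + 2 * XF e K a0 x * sin ((x-a0)/2) * cos a0) / NF e K a0 x.

Lemma NF_pos e K a0 x : 0 < e -> 0 < NF e K a0 x.
Proof. intro. unfold NF, XF. apply Npos_lem; auto. pose proof (sin2_cos2 ((x-a0)/2)). unfold Rsqr in H0. lra. Qed.

Lemma M_deriv M e K a0 x : 0 < e -> continuous M x ->
  (forall x, cos (M x) = GcF e K a0 x) -> (forall x, sin (M x) = GsF e K a0 x) ->
  is_derive M x (e / NF e K a0 x).
Proof.
  intros he hM hc hs. pose proof (NF_pos e K a0 x he) as hN.
  evar (dc : R). assert (hdc : is_derive (GcF e K a0) x dc).
  { unfold GcF, NF, XF. auto_derive. unfold NF, XF in hN. change ((x + - a0) * / 2) with ((x - a0) / 2). intro hh0; lra.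
    unfold dc. change ((x + - a0) * / 2) with ((x - a0) / 2). reflexivity. }
  evar (ds : R). assert (hds : is_derive (GsF e K a0) x ds).
  { unfold GsF, NF, XF. auto_derive. unfold NF, XF in hN. change ((x + - a0) * / 2) with ((x - a0) / 2). intro hh0; lra.
    unfold ds. change ((x + - a0) * / 2) with ((x - a0) / 2). reflexivity. }
  pose proof (lift_deriv M _ _ x dc ds hM hc hs hdc hds) as h.
  replace (e / NF e K a0 x) with (GcF e K a0 x * ds - GsF e K a0 x * dc); auto.
  unfold ds, dc. clear ds dc hds hdc h.
  unfold GcF, GsF, NF, XF in *.
  pose proof (sin2_cos2 ((x-a0)/2)) as h1. pose proof (sin2_cos2 a0) as h2. unfold Rsqr in h1, h2.
  set (c := cos ((x-a0)/2)) in *. set (s := sin ((x-a0)/2)) in *.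
  set (ca := cos a0) in *. set (sa := sin a0) in *.
  replace (e / ((e * (c + s * K)) ^ 2 + s ^ 2)) with ((sa*sa+ca*ca) * e * (s*s+c*c) / ((e * (c + s * K)) ^ 2 + s ^ 2))
    by (rewrite h1, h2; field; lra).
  field. intro hh0; lra.
Qed.

Lemma key l T Fx Fy Rx Ry M a0 x : 0 < l -> closed_arclength_front Fx Fy T ->
  rear_track l Fx Fy Rx Ry T -> Rx T = Rx 0 -> Ry T = Ry 0 ->
  rel_angle l Fx Fy Rx Ry 0 a0 -> is_monodromy l Fx Fy T M ->
  cos (M x) = GcF (EE l T Fx Fy Rx Ry T) (II l T Fx Fy Rx Ry T) a0 x /\
  sin (M x) = GsF (EE l T Fx Fy Rx Ry T) (II l T Fx Fy Rx Ry T) a0 x.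
Proof.
  intros hl hF hR hxT hyT [ha1 ha2] [_ hMon].
  pose proof hF as [hT [_ [_ [hper _]]]].
  destruct (hper 0) as [hp1 hp2]. rewrite Rplus_0_l in hp1, hp2.
  set (ps := x - a0).
  pose proof (new_track l T Fx Fy Rx Ry ps hl hF hR) as hnew.
  assert (h1 := sin2_cos2 (ps/2)). unfold Rsqr in h1.
  assert (hpos := XX_N l T Fx Fy Rx Ry ps 0).
  assert (hX0 : XX l T Fx Fy Rx Ry ps 0 = cos (ps/2)).
  { unfold XX. rewrite EE_0, II_0. ring. }
  assert (hx : x = a0 + 2 * (ps/2)) by (unfold ps; field).
  assert (h0 : rel_angle l Fx Fy (RXt l T Fx Fy Rx Ry ps) (RYt l T Fx Fy Rx Ry ps) 0 x).
  { unfold rel_angle, RXt, RYt, UX, UY. rewrite hX0 in *.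
    rewrite ha1, ha2, hx, cos_plus, sin_plus, sin_2a, cos_2a.
    replace (cos (ps / 2) ^ 2 + sin (ps / 2) ^ 2) with 1 by lra.
    split; field; lra. }
  destruct (hMon _ _ x hnew h0) as [hT1 hT2].
  unfold RXt, RYt in hT1, hT2.
  unfold UX, UY in hT1, hT2. rewrite hp1, hp2, hxT, hyT, ha1, ha2 in hT1, hT2.
  unfold GcF, GsF, NF, XF. fold ps. unfold XX in hT1, hT2.
  assert (hpT := XX_N l T Fx Fy Rx Ry ps T). unfold XX in hpT.
  set (XT := EE l T Fx Fy Rx Ry T * (cos (ps / 2) + sin (ps / 2) * II l T Fx Fy Rx Ry T)) in *.
  split.
  - apply Rmult_eq_reg_l with l; [|lra]. rewrite <- hT1. field; repeat split; intro hh0; lra.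
  - apply Rmult_eq_reg_l with l; [|lra]. rewrite <- hT2. field; repeat split; intro hh0; lra.
Qed.

Lemma EE_T l T Fx Fy Rx Ry : 0 < l -> closed_arclength_front Fx Fy T ->
  rear_track l Fx Fy Rx Ry T ->
  EE l T Fx Fy Rx Ry T = exp (signed_length l Fx Fy Rx Ry T / l).
Proof.
  intros hl hF hR. pose proof hF as [hT _]. unfold EE, signed_length. f_equal.
  rewrite (RInt_ext _ (fun t => scal (/l) (cos_steer l Fx Fy Rx Ry t))).
  - rewrite (@RInt_scal R_CompleteNormedModule). unfold scal; simpl. unfold mult; simpl. unfold Rdiv. ring.
    apply (@ex_RInt_continuous R_CompleteNormedModule). intros z hz.
    rewrite Rmin_left, Rmax_right in hz by lra.
    apply (@ex_derive_continuous R_AbsRing R_NormedModule).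
    apply (steer_ex_derive l T Fx Fy Rx Ry z hF hR hz).
  - intros z hz. rewrite Rmin_left, Rmax_right in hz by lra.
    unfold hh. rewrite clamp_id by lra. unfold scal; simpl. unfold mult; simpl. unfold Rdiv. ring.
Qed.

Lemma fixN (X s c N : R) : N = X^2 + s^2 -> 0 < N -> c^2 + s^2 = 1 -> s <> 0 ->
  X^2 - s^2 = N * (c^2 - s^2) -> 2*X*s = N * (2*s*c) -> N = 1.
Proof.
  intros hN hNp hcs hs h1 h2.
  assert (hX : X = N * c).
  { apply Rmult_eq_reg_l with (2*s). lra. intro h; apply hs; lra. }
  subst X.
  assert (h3 : (N - 1) * (N * c^2 + s^2) = 0) by nra.
  assert (h4 : 0 < N * c^2 + s^2).
  { pose proof (pow2_gt_0 s hs). pose proof (pow2_ge_0 c). nra. }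
  destruct (Rmult_integral _ _ h3); lra.
Qed.

Lemma fixed_N e K a0 b : 0 < e ->
  cos b = GcF e K a0 b -> sin b = GsF e K a0 b -> sin ((b-a0)/2) <> 0 ->
  NF e K a0 b = 1.
Proof.
  intros he hcb hsb hs.
  pose proof (NF_pos e K a0 b he) as hN.
  unfold GcF, GsF in hcb, hsb.
  set (h := (b-a0)/2) in *.
  assert (hb : b = a0 + 2*h) by (unfold h; field).
  assert (hcb' : cos b = cos a0 * (cos h * cos h - sin h * sin h) - sin a0 * (2 * sin h * cos h))
    by (rewrite hb, cos_plus, cos_2a, sin_2a; reflexivity).
  assert (hsb' : sin b = sin a0 * (cos h * cos h - sin h * sin h) + cos a0 * (2 * sin h * cos h))
    by (rewrite hb, sin_plus, cos_2a, sin_2a; reflexivity).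
  rewrite hcb' in hcb. rewrite hsb' in hsb. clear hcb' hsb' hb.
  set (X := XF e K a0 b) in *. set (N := NF e K a0 b) in *.
  set (c := cos h) in *. set (s := sin h) in *.
  set (ca := cos a0) in *. set (sa := sin a0) in *.
  pose proof (sin2_cos2 h) as h1. pose proof (sin2_cos2 a0) as h2. unfold Rsqr in h1, h2. fold c s ca sa in h1, h2.
  set (A := X^2 - s^2) in *. set (B := 2*X*s) in *.
  set (P := c*c - s*s) in *. set (Q := 2*s*c) in *.
  assert (e1 : A*ca - B*sa = N*(ca*P - sa*Q)).
  { replace (ca*P - sa*Q) with (ca * P - sa * Q) by ring. rewrite hcb. field. lra. }
  assert (e2 : A*sa + B*ca = N*(sa*P + ca*Q)).
  { rewrite hsb. field. lra. }
  assert (eA : A = N*P).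
  { replace A with (A*(sa*sa+ca*ca)) by (rewrite h2; ring).
    replace (A*(sa*sa+ca*ca)) with (ca*(A*ca - B*sa) + sa*(A*sa+B*ca)) by (unfold B; ring).
    rewrite e1, e2. replace (N*P) with (N*P*(sa*sa+ca*ca)) by (rewrite h2; ring). ring. }
  assert (eB : B = N*Q).
  { replace B with (B*(sa*sa+ca*ca)) by (rewrite h2; ring).
    replace (B*(sa*sa+ca*ca)) with (ca*(A*sa+B*ca) - sa*(A*ca - B*sa)) by (unfold A; ring).
    rewrite e1, e2. replace (N*Q) with (N*Q*(sa*sa+ca*ca)) by (rewrite h2; ring). ring. }
  refine (fixN X s c N _ _ _ hs _ _).
  - unfold N, NF. fold h X s. reflexivity.
  - lra.
  - lra.
  - unfold A, P in eA. rewrite eA. ring.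
  - unfold B, Q in eB. rewrite eB. ring.
Qed.

Theorem theorem3 (l T : R) (Fx Fy Rx Ry M : R -> R) (a0 : R) :
  0 < l ->
  closed_arclength_front Fx Fy T ->
  rear_track l Fx Fy Rx Ry T ->
  Rx T = Rx 0 -> Ry T = Ry 0 ->
  rel_angle l Fx Fy Rx Ry 0 a0 ->
  is_monodromy l Fx Fy T M ->
  let L := signed_length l Fx Fy Rx Ry T in
  is_derive M a0 (exp (- L / l)) /\
  (exists b, circle_fixed M b /\ is_derive M b (exp (L / l))) /\
  (forall b, circle_fixed M b ->
     (forall k : Z, b <> a0 + 2 * IZR k * PI) ->
     is_derive M b (exp (L / l))).
Proof.
  intros hl hF hR hxT hyT ha0 hMon L.
  pose proof hMon as [hMc _].
  pose proof (EE_T l T Fx Fy Rx Ry hl hF hR) as hE. fold L in hE.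
  set (e := EE l T Fx Fy Rx Ry T) in *. set (K := II l T Fx Fy Rx Ry T) in *.
  assert (he : 0 < e) by (rewrite hE; apply exp_pos).
  assert (hc : forall x, cos (M x) = GcF e K a0 x) by
    (intro x; apply (key l T Fx Fy Rx Ry M a0 x hl hF hR hxT hyT ha0 hMon)).
  assert (hs : forall x, sin (M x) = GsF e K a0 x) by
    (intro x; apply (key l T Fx Fy Rx Ry M a0 x hl hF hR hxT hyT ha0 hMon)).
  assert (hd : forall x, is_derive M x (e / NF e K a0 x)) by
    (intro x; apply M_deriv; auto).
  assert (hN0 : NF e K a0 a0 = e^2).
  { unfold NF, XF. replace ((a0-a0)/2) with 0 by field. rewrite sin_0, cos_0. ring. }
  assert (hfix3 : forall b, circle_fixed M b -> (forall k : Z, b <> a0 + 2 * IZR k * PI) ->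
     is_derive M b (exp (L / l))).
  { intros b hb hk. destruct (circle_fixed_cs M b hb) as [h1 h2].
    assert (hsn : sin ((b-a0)/2) <> 0).
    { intro h0. destruct (sin_eq_0_0 _ h0) as [k hk']. apply (hk k). lra. }
    rewrite hc in h1. rewrite hs in h2.
    pose proof (fixed_N e K a0 b he (eq_sym h1) (eq_sym h2) hsn) as hN1.
    rewrite <- hE. pose proof (hd b) as hdb. rewrite hN1 in hdb. replace (e/1) with e in hdb by field. exact hdb. }
  split; [|split; [|exact hfix3]].
  - replace (exp (- L / l)) with (e / NF e K a0 a0). apply hd.
    rewrite hN0, hE. replace (- L / l) with (- (L / l)) by (field; lra). rewrite exp_Ropp.
    field. pose proof (exp_pos (L/l)). lra.
  - destruct (Req_dec e 1) as [he1|he1].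
    + exists a0. split.
      * apply circle_fixed_iff; [rewrite hc; unfold GcF | rewrite hs; unfold GsF];
          rewrite hN0; unfold XF; replace ((a0-a0)/2) with 0 by field; rewrite sin_0, cos_0;
          field; lra.
      * rewrite <- hE. assert (hq : e / NF e K a0 a0 = e) by (rewrite hN0, he1; field).
        pose proof (hd a0) as hda. rewrite hq in hda. exact hda.
    + set (u := e*K/(e-1)). set (h := PI/2 + atan u). exists (a0 + 2*h).
      assert (hca : 0 < cos (atan u)) by (pose proof (atan_bound u); apply cos_gt_0; lra).
      assert (hsa : sin (atan u) = u * cos (atan u)).
      { pose proof (tan_atan u) as ht. unfold tan in ht.
        replace (u * cos (atan u)) with (sin (atan u) / cos (atan u) * cos (atan u)) by (rewrite ht; reflexivity).
        field. lra. }
      assert (hch : cos h = - sin (atan u)) by (unfold h; rewrite cos_plus, cos_PI2, sin_PI2; ring).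
      assert (hsh : sin h = cos (atan u)) by (unfold h; rewrite sin_plus, cos_PI2, sin_PI2; ring).
      assert (hh : (a0 + 2*h - a0)/2 = h) by field.
      assert (hX : XF e K a0 (a0 + 2*h) = cos h).
      { unfold XF. rewrite hh, hch, hsh, hsa. unfold u. field. intro; apply he1; lra. }
      assert (hN1 : NF e K a0 (a0 + 2*h) = 1).
      { unfold NF. rewrite hX, hh. pose proof (sin2_cos2 h). unfold Rsqr in H. lra. }
      split.
      * apply circle_fixed_iff; [rewrite hc; unfold GcF | rewrite hs; unfold GsF];
          rewrite hN1, hX, hh; [rewrite cos_plus | rewrite sin_plus]; rewrite cos_2a, sin_2a; field.
      * rewrite <- hE. pose proof (hd (a0 + 2*h)) as hdb. rewrite hN1 in hdb.
        replace (e/1) with e in hdb by field. exact hdb.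
Qed.
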